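(* Let $(Y,\|\ \|)$ be a normed $K$-vector space with an orthogonal basis $\{x_\ell\}_{\ell\in I}$ (i.e. $\|\sum c_\ell x_\ell\|=\sup_\ell|c_\ell|\,\|x_\ell\|$ for all vectors $\sum c_\ell x_\ell\in Y$), and let $\le$ be a partial order on $I$ such that every nonempty subset of $I$ has a minimal element and $\{\ell\in I:\ell\le k\}$ is finite for every $k\in I$. Suppose $\|x_\ell\|\le\|x_k\|$ whenever $\ell\le k$, and let $c_{\ell k}\in K$ with $|c_{\ell k}|\le1$ be given for all $\ell\le k$. Then the vectors $y_k:=x_k+\sum_{\ell<k}c_{\ell k}x_\ell$ ($k\in I$) form another orthogonal basis of $Y$, and $\|y_k\|=\|x_k\|$.
   Context: $K$ is a complete extension field of $\mathbb{Q}_p$ with absolute value $|\ |$. A basis means an algebraic basis of the vector space $Y$. *)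

(* Defs.v *)
From HB Require Import structures.
From mathcomp Require Import all_boot all_order all_algebra.
From mathcomp Require Import boolp classical_sets functions cardinality fsbigop reals.
Set Implicit Arguments. Unset Strict Implicit. Unset Printing Implicit Defensive.
Import Order.TTheory GRing.Theory Num.Theory.
Local Open Scope classical_set_scope.
Local Open Scope ring_scope.

Section Defs.
Variable R : realType.

(* K is a complete field with absolute value |.| : K -> R extending the
   p-adic absolute value of Q (|p| = 1/p), i.e. a complete extension of Q_p. *)
Definition padic_complete_field (p : nat) (K : fieldType) (abs : K -> R) : Prop :=
  [/\ prime p, (
      (forall a : K, 0 <= abs a) /\
      (forall a : K, abs a = 0 <-> a = 0) /\
      (forall a b : K, abs (a * b) = abs a * abs b) /\
      (forall a b : K, abs (a + b) <= Num.max (abs a) (abs b))),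
      abs (p%:R : K) = (p%:R : R)^-1 &
      (forall u : nat -> K,
        (forall e : R, 0 < e -> exists N : nat, forall m n : nat,
            (N <= m)%N -> (N <= n)%N -> abs (u m - u n) < e) ->
        exists l : K, forall e : R, 0 < e -> exists N : nat, forall n : nat,
            (N <= n)%N -> abs (u n - l) < e)].

Variables (K : fieldType) (abs : K -> R).

Definition normed_space (Y : lmodType K) (nrm : Y -> R) : Prop :=
  [/\ (forall y : Y, 0 <= nrm y),
      (forall y : Y, nrm y = 0 <-> y = 0),
      (forall (a : K) (y : Y), nrm (a *: y) = abs a * nrm y) &
      (forall y z : Y, nrm (y + z) <= Num.max (nrm y) (nrm z))].

Variables (Y : lmodType K) (nrm : Y -> R) (I : choiceType).

Definition fsupp (c : I -> K) : set I := [set i | c i != 0].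

Definition lincomb (x : I -> Y) (c : I -> K) : Y :=
  \sum_(i \in fsupp c) c i *: x i.

Definition is_basis (x : I -> Y) : Prop :=
  forall y : Y, exists! c : I -> K, finite_set (fsupp c) /\ y = lincomb x c.

Definition orthogonal_basis (x : I -> Y) : Prop :=
  is_basis x /\
  forall c : I -> K, finite_set (fsupp c) ->
    nrm (lincomb x c) = sup (range (fun l => abs (c l) * nrm (x l))).

End Defs.

(* Main.v *)
Require Import Defs.
From HB Require Import structures.
From mathcomp Require Import all_boot all_order all_algebra finmap.
From mathcomp Require Import boolp classical_sets functions cardinality fsbigop reals.
Import Order.TTheory GRing.Theory Num.Theory.
Local Open Scope classical_set_scope.
Local Open Scope ring_scope.

Section Abs.
Variables (R : realType) (K : fieldType) (abs : K -> R).
Hypothesis abs_ge0 : forall a : K, 0 <= abs a.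
Hypothesis abs_eq0 : forall a : K, abs a = 0 <-> a = 0.
Hypothesis absM : forall a b : K, abs (a * b) = abs a * abs b.
Hypothesis absD : forall a b : K, abs (a + b) <= Num.max (abs a) (abs b).

Lemma abs1 : abs 1 = 1.
Proof.
have h := absM 1 1; rewrite mulr1 in h.
have h0 : abs 1 != 0 by apply/eqP => /abs_eq0 /eqP; rewrite oner_eq0.
by apply: (mulIf h0); rewrite mul1r -h.
Qed.

Lemma absN1 : abs (-1) = 1.
Proof.
have h := absM (-1) (-1); rewrite mulrNN mulr1 abs1 in h.
have h0 := abs_ge0 (-1).
have : (abs (-1) - 1) * (abs (-1) + 1) = 0 by rewrite -subr_sqr expr1n expr2 -h subrr.
move/eqP; rewrite mulf_eq0 => /orP [/eqP|]; first by move/eqP; rewrite subr_eq0 => /eqP.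
move=> /eqP h1; have : 0 < abs (-1) + 1 by rewrite ltr_wpDl.
by rewrite h1 ltxx.
Qed.

Lemma absN a : abs (- a) = abs a.
Proof. by rewrite -mulN1r absM absN1 mul1r. Qed.

Lemma max_mulr (u v rho : R) : 0 <= rho -> Num.max u v * rho = Num.max (u * rho) (v * rho).
Proof.
move=> hr; case: (lerP u v) => h.
  by rewrite !max_r // ler_wpM2r.
by rewrite !max_l // ?ler_wpM2r // ltW.
Qed.

Lemma abs_sum_le (I : eqType) (s : seq I) (F : I -> K) (rho B : R) :
  0 <= rho -> 0 <= B -> (forall i, i \in s -> abs (F i) * rho <= B) ->
  abs (\sum_(i <- s) F i) * rho <= B.
Proof.
move=> hr hB; elim: s => [|a s IH] H; first by rewrite big_nil (abs_eq0 0).2 // mul0r.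
rewrite big_cons; apply: le_trans (ler_wpM2r hr (absD _ _)) _.
rewrite max_mulr // ge_max H ?mem_head // IH // => i hi.
by apply: H; rewrite in_cons hi orbT.
Qed.

Lemma abs_sum_lt (I : eqType) (s : seq I) (F : I -> K) (rho B : R) :
  0 <= rho -> 0 < B -> (forall i, i \in s -> abs (F i) * rho < B) ->
  abs (\sum_(i <- s) F i) * rho < B.
Proof.
move=> hr hB; elim: s => [|a s IH] H; first by rewrite big_nil (abs_eq0 0).2 // mul0r.
rewrite big_cons; apply: le_lt_trans (ler_wpM2r hr (absD _ _)) _.
rewrite max_mulr // gt_max H ?mem_head // IH // => i hi.
by apply: H; rewrite in_cons hi orbT.
Qed.

End Abs.
Section Lin.
Variables (K : fieldType) (Y : lmodType K) (I : choiceType).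

Lemma lincomb_seq (z : I -> Y) (d : I -> K) (r : seq I) : uniq r ->
  fsupp d `<=` [set` r] -> lincomb z d = \sum_(i <- r) d i *: z i.
Proof.
move=> ur sub; rewrite /lincomb (fsbig_fwiden r) //.
move=> i [_ /=]; rewrite /fsupp /= => /negP; rewrite negbK => /eqP ->.
by rewrite scale0r.
Qed.

Lemma nfsupp (d : I -> K) i : ~ fsupp d i -> d i = 0.
Proof. by rewrite /fsupp /= => /negP; rewrite negbK => /eqP. Qed.

Definition cover2 (d1 d2 : I -> K) : seq I := fset_set (fsupp d1 `|` fsupp d2).

Lemma cover2P d1 d2 : finite_set (fsupp d1) -> finite_set (fsupp d2) ->
  uniq (cover2 d1 d2) /\ fsupp d1 `<=` [set` cover2 d1 d2] /\ fsupp d2 `<=` [set` cover2 d1 d2].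
Proof.
move=> f1 f2; have fU : finite_set (fsupp d1 `|` fsupp d2) by rewrite finite_setU.
split; first exact: fset_uniq.
by split=> i hi /=; rewrite in_fset_set // inE; [left|right].
Qed.

Lemma lincomb0 (z : I -> Y) : lincomb z (fun _ => 0) = 0.
Proof. by rewrite /lincomb fsbig1 // => i _; rewrite scale0r. Qed.

Definition delta (k : I) : I -> K := fun i => if i == k then 1 else 0.

Lemma fsupp_delta k : fsupp (delta k) `<=` [set` [:: k]].
Proof.
move=> i; rewrite /fsupp /delta /=; have [->|ne] := eqVneq i k; first by rewrite mem_seq1.
by rewrite eqxx.
Qed.

Lemma finite_delta k : finite_set (fsupp (delta k)).
Proof. exact: sub_finite_set (fsupp_delta k) (finite_seq _). Qed.

Lemma lincomb_delta (z : I -> Y) k : lincomb z (delta k) = z k.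
Proof.
rewrite (@lincomb_seq _ _ [:: k]) //; last exact: fsupp_delta.
by rewrite big_seq1 /delta eqxx scale1r.
Qed.

Lemma lincombD (z : I -> Y) d1 d2 : finite_set (fsupp d1) -> finite_set (fsupp d2) ->
  lincomb z (fun i => d1 i + d2 i) = lincomb z d1 + lincomb z d2.
Proof.
move=> f1 f2; have [u [s1 s2]] := @cover2P d1 d2 f1 f2.
rewrite !(@lincomb_seq _ _ (cover2 d1 d2)) //; last first.
  move=> i; rewrite /fsupp /= => h; apply: contraNT h => hi.
  have h1 : ~ fsupp d1 i by move/s1 => /=; rewrite (negbTE hi).
  have h2 : ~ fsupp d2 i by move/s2 => /=; rewrite (negbTE hi).
  by rewrite (nfsupp _ _ h1) (nfsupp _ _ h2) addr0.
by rewrite -big_split /=; apply: eq_bigr => i _; rewrite scalerDl.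
Qed.

Lemma lincombZ (z : I -> Y) a d : finite_set (fsupp d) ->
  lincomb z (fun i => a * d i) = a *: lincomb z d.
Proof.
move=> fd; have u : uniq (fset_set (fsupp d)) by exact: fset_uniq.
have sd : fsupp d `<=` [set` fset_set (fsupp d)].
  by move=> i hi /=; rewrite in_fset_set // inE.
rewrite !(@lincomb_seq _ _ (fset_set (fsupp d))) //; last first.
  move=> i; rewrite /fsupp /= mulf_eq0 negb_or => /andP [_ h].
  by apply: sd.
by rewrite scaler_sumr; apply: eq_bigr => i _; rewrite scalerA.
Qed.

Lemma fsuppZ (a : K) (d : I -> K) : finite_set (fsupp d) -> finite_set (fsupp (fun i : I => a * d i)).
Proof.
move=> fd; apply: sub_finite_set fd => i; rewrite /fsupp /= mulf_eq0 negb_or.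
by case/andP.
Qed.

Lemma fsuppD (d1 d2 : I -> K) : finite_set (fsupp d1) -> finite_set (fsupp d2) ->
  finite_set (fsupp (fun i : I => d1 i + d2 i)).
Proof.
move=> f1 f2; have fU : finite_set (fsupp d1 `|` fsupp d2) by rewrite finite_setU.
apply: sub_finite_set fU => i h.
case: (pselect (fsupp d1 i)) => [h1|h1]; first by left.
case: (pselect (fsupp d2 i)) => [h2|h2]; first by right.
by move: h; rewrite /fsupp /= (nfsupp _ _ h1) (nfsupp _ _ h2) addr0 eqxx.
Qed.

Lemma lincombB (z : I -> Y) d1 d2 : finite_set (fsupp d1) -> finite_set (fsupp d2) ->
  lincomb z (fun i => d1 i - d2 i) = lincomb z d1 - lincomb z d2.
Proof.
move=> f1 f2.
have -> : (fun i => d1 i - d2 i) = (fun i => d1 i + (-1) * d2 i).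
  by apply: funext => i; rewrite mulN1r.
by rewrite lincombD ?lincombZ ?scaleN1r //; apply: fsuppZ.
Qed.

Lemma fsuppB (d1 d2 : I -> K) : finite_set (fsupp d1) -> finite_set (fsupp d2) ->
  finite_set (fsupp (fun i : I => d1 i - d2 i)).
Proof.
move=> f1 f2; have -> : (fun i => d1 i - d2 i) = (fun i => d1 i + (-1) * d2 i).
  by apply: funext => i; rewrite mulN1r.
by apply: fsuppD => //; apply: fsuppZ.
Qed.

End Lin.


Lemma seq_max (T : eqType) (R : realType) (s : seq T) (f : T -> R) (k : T) : k \in s ->
  exists2 m, m \in s & forall j, j \in s -> f j <= f m.
Proof.
elim: s k => [//|b s IH] k _.
case: s IH => [|b' s] IH.
  by exists b; rewrite ?mem_head // => j; rewrite mem_seq1 => /eqP ->.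
have [m ms hm] := IH b' (mem_head _ _).
case: (lerP (f b) (f m)) => h.
  exists m; first by rewrite in_cons ms orbT.
  by move=> j; rewrite in_cons => /orP [/eqP ->|/hm].
exists b; first by rewrite mem_head.
move=> j; rewrite in_cons => /orP [/eqP ->//|/hm hj].
exact: le_trans hj (ltW h).
Qed.

Lemma seq_maximal (T : eqType) (le : T -> T -> Prop)
  (le_anti : forall k l, le k l -> le l k -> k = l)
  (le_trans : forall k l m, le k l -> le l m -> le k m)
  (s : seq T) (k : T) : k \in s ->
  exists2 m, m \in s & forall j, j \in s -> le m j -> j = m.
Proof.
elim: s k => [//|b s IH] k _.
case: s IH => [|b' s] IH.
  by exists b; rewrite ?mem_head // => j; rewrite mem_seq1 => /eqP ->.
have [m ms hm] := IH b' (mem_head _ _).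
case: (pselect (le m b)) => h.
  exists b; first by rewrite mem_head.
  move=> j; rewrite in_cons => /orP [/eqP ->//|js] hbj.
  have ej := hm j js (le_trans _ _ _ h hbj).
  by rewrite ej in hbj *; apply: le_anti.
exists m; first by rewrite in_cons ms orbT.
move=> j; rewrite in_cons => /orP [/eqP ->|/hm //] hmb.
by [].
Qed.

Lemma sup_attained (T : Type) (R : realType) (f : T -> R) (M : R) (i0 : T) :
  (forall i, f i <= M) -> f i0 = M -> sup (range f) = M.
Proof.
move=> hle hi0; apply/eqP; rewrite eq_le; apply/andP; split.
  apply: ge_sup; first by exists (f i0); exists i0.
  by move=> _ [i _ <-].
have hs : has_sup (range f).
  split; first by exists (f i0); exists i0.
  by exists M => _ [i _ <-].
by rewrite -hi0; apply: (sup_upper_bound hs); exists i0.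
Qed.

Section Main.
Variables (R : realType) (K : fieldType) (abs : K -> R).
Hypothesis abs_ge0 : forall a : K, 0 <= abs a.
Hypothesis abs_eq0 : forall a : K, abs a = 0 <-> a = 0.
Hypothesis absM : forall a b : K, abs (a * b) = abs a * abs b.
Hypothesis absD : forall a b : K, abs (a + b) <= Num.max (abs a) (abs b).
Variables (Y : lmodType K) (nrm : Y -> R).
Hypothesis nrm_ge0 : forall y : Y, 0 <= nrm y.
Hypothesis nrm_eq0 : forall y : Y, nrm y = 0 <-> y = 0.
Variables (I : choiceType) (x : I -> Y).
Hypothesis xbasis : is_basis x.
Hypothesis xorth : forall c : I -> K, finite_set (fsupp c) ->
    nrm (lincomb x c) = sup (range (fun l => abs (c l) * nrm (x l))).
Variable le : I -> I -> Prop.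
Hypothesis Lrefl : forall k, le k k.
Hypothesis Lanti : forall k l, le k l -> le l k -> k = l.
Hypothesis Ltrans : forall k l m, le k l -> le l m -> le k m.
Hypothesis le_min : forall S : set I, S !=set0 ->
      exists m, S m /\ forall l, S l -> le l m -> l = m.
Hypothesis le_fin : forall k, finite_set [set l | le l k].
Hypothesis Hmono : forall l k, le l k -> nrm (x l) <= nrm (x k).
Variable c : I -> I -> K.
Hypothesis Hc : forall l k, le l k -> abs (c l k) <= 1.

Lemma wf_ind (P : I -> Prop) :
  (forall m, (forall l, le l m -> l <> m -> P l) -> P m) -> forall m, P m.
Proof.
move=> H m; apply: contrapT => nPm.
have [m0 [Sm0 hm0]] := le_min [set m | ~ P m] (ex_intro _ m nPm).
apply: Sm0; apply: H => l hl hne; apply: contrapT => nPl.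
exact: hne (hm0 l nPl hl).
Qed.

Lemma fsupp0 : finite_set (fsupp (fun _ : I => (0 : K))).
Proof.
apply: sub_finite_set (finite_set0 I) => i; rewrite /fsupp /= eqxx.
by [].
Qed.

Lemma xk_pos k : 0 < nrm (x k).
Proof.
rewrite lt_def nrm_ge0 andbT; apply/eqP => /nrm_eq0 xk0.
have [c0 [_ hu]] := xbasis (x k).
have e1 := hu _ (conj fsupp0 (esym (etrans (lincomb0 _ _ _ x) (esym xk0)))).
have e2 := hu _ (conj (finite_delta _ _ k) (esym (lincomb_delta _ _ _ x k))).
have := congr1 (fun f => f k) (etrans (esym e1) e2).
by rewrite /delta eqxx => /eqP; rewrite eq_sym oner_eq0.
Qed.

Lemma downset (d : I -> K) : finite_set (fsupp d) ->
  exists r : seq I, [/\ uniq r, fsupp d `<=` [set` r] &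
     forall k l, d k != 0 -> le l k -> l \in r].
Proof.
move=> fd.
have fT : finite_set (\bigcup_(k in fsupp d) [set l | le l k]).
  by apply: bigcup_finite => // k _; apply: le_fin.
exists (fset_set (\bigcup_(k in fsupp d) [set l | le l k])); split.
- exact: fset_uniq.
- by move=> k hk /=; rewrite in_fset_set // inE; exists k.
- by move=> k l hk hl; rewrite in_fset_set // inE; exists k.
Qed.

Definition a (l k : I) : K := if l == k then 1 else if `[< le l k >] then c l k else 0.

Definition yv (k : I) : Y := x k + \sum_(l \in [set l | le l k /\ l <> k]) c l k *: x l.

Lemma y_seq k (r : seq I) : uniq r -> [set l | le l k] `<=` [set` r] ->
  yv k = \sum_(l <- r) a l k *: x l.
Proof.
move=> ur sub.
have kr : k \in r by exact: (sub k (Lrefl k)).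
rewrite (bigD1_seq k) //= {1}/a eqxx scale1r /yv; congr (_ + _).
rewrite (eq_fsbigr (fun l => if l != k then a l k *: x l else 0)); last first.
  move=> l; rewrite inE => -[hl hne]; rewrite /a.
  rewrite (introF eqP hne) /= (asboolT hl) //.
rewrite (fsbig_fwiden r); last 3 first.
- by move=> l [hl _]; apply: sub.
- by [].
- move=> l [hr hP] /=; case: eqVneq => [//|ne]; rewrite /a (negbTE ne).
  rewrite asboolF ?scale0r // => hl; apply: hP; split=> //; exact/eqP.
by rewrite [RHS]big_mkcond.
Qed.

Lemma absone : abs 1 = 1.
Proof. exact: abs1. Qed.

Lemma absNN (b : K) : abs (- b) = abs b.
Proof. exact: absN. Qed.

Lemma abs0 : abs 0 = 0.
Proof. exact/abs_eq0. Qed.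

Lemma core (d : I -> K) k1 : finite_set (fsupp d) -> d k1 != 0 ->
  exists M, [/\ nrm (lincomb yv d) = M, forall k, abs (d k) * nrm (x k) <= M &
     exists k0, abs (d k0) * nrm (x k0) = M].
Proof.
move=> fd dk1.
have [r [ur sd hr]] := downset d fd.
pose e l := \sum_(k <- r) d k * a l k.
pose dv k := abs (d k) * nrm (x k).
have hse : fsupp e `<=` [set` r].
  move=> l; rewrite /fsupp /= => hel; apply: contraNT hel => lr.
  apply/eqP; rewrite /e big1_seq // => k /andP [_ kr].
  have [->|dk] := eqVneq (d k) 0; first by rewrite mul0r.
  rewrite /a; case: eqVneq => [elk|nelk]; first by rewrite elk kr in lr.
  case: (pselect (le l k)) => hlk; first by rewrite (hr _ _ dk hlk) in lr.
  by rewrite asboolF // mulr0.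
have fe : finite_set (fsupp e) by exact: sub_finite_set hse (finite_seq r).
have hlin : lincomb yv d = lincomb x e.
  rewrite (lincomb_seq _ _ _ yv d r ur sd) (lincomb_seq _ _ _ x e r ur hse).
  transitivity (\sum_(k <- r) d k *: \sum_(l <- r) a l k *: x l).
    apply: eq_big_seq => k kr.
    have [->|dk] := eqVneq (d k) 0; first by rewrite !scale0r.
    by rewrite (y_seq k r ur) // => l hl; apply: hr dk hl.
  rewrite (eq_bigr (fun k => \sum_(l <- r) (d k * a l k) *: x l)); last first.
    by move=> k _; rewrite scaler_sumr; apply: eq_bigr => l _; rewrite scalerA.
  rewrite exchange_big /=; apply: eq_bigr => l _.
  by rewrite /e scaler_suml.
have k1r : k1 \in r by exact: sd.
have [m mr hm] := seq_max _ _ r dv k1 k1r.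
pose M := dv m.
have M0 : 0 <= M by rewrite /M /dv mulr_ge0.
have hdle : forall k, dv k <= M.
  move=> k; have [kr|nkr] := boolP (k \in r); first exact: hm.
  have nk : ~ fsupp d k by move/sd => /=; rewrite (negbTE nkr).
  by rewrite /dv (nfsupp _ _ _ _ nk) abs0 mul0r.
have hMpos : 0 < M.
  apply: lt_le_trans (hdle k1); rewrite /dv mulr_gt0 ?xk_pos //.
  by rewrite lt_def abs_ge0 andbT; apply/eqP => /abs_eq0 h; rewrite h eqxx in dk1.
have hterm : forall l k, le l k -> abs (d k) * abs (c l k) * nrm (x l) <= dv k.
  move=> l k hlk; rewrite -mulrA /dv; apply: ler_wpM2l => //.
  rewrite -[nrm (x k)]mul1r; apply: ler_pM => //; [exact: Hc | exact: Hmono].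
have heup : forall l, abs (e l) * nrm (x l) <= M.
  move=> l; apply: abs_sum_le => // k kr.
  rewrite absM /a; have [->|nlk] := eqVneq l k.
    by rewrite absone mulr1; exact: hdle.
  case: (pselect (le l k)) => hlk.
    by rewrite asboolT //; apply: le_trans (hterm _ _ hlk) (hdle k).
  by rewrite asboolF // abs0 mulr0 mul0r.
pose s := [seq k <- r | dv k == M].
have ms : m \in s by rewrite mem_filter eqxx mr.
have [k0 k0s hk0] := seq_maximal _ le Lanti Ltrans s m ms.
move: (k0s); rewrite mem_filter => /andP [/eqP dvk0 k0r].
have hlow : M <= abs (e k0) * nrm (x k0).
  rewrite /e (bigD1_seq k0) //= {1}/a eqxx mulr1.
  set rest := \sum_(k <- r | k != k0) d k * a k0 k.
  have hrest : abs rest * nrm (x k0) < M.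
    rewrite /rest -big_filter; apply: abs_sum_lt => // k.
    rewrite mem_filter => /andP [nk kr].
    rewrite absM /a eq_sym (negbTE nk).
    case: (pselect (le k0 k)) => hk.
      rewrite asboolT //; apply: le_lt_trans (hterm _ _ hk) _.
      rewrite lt_def hdle andbT; apply/eqP => dvk.
      have ks : k \in s by rewrite mem_filter dvk eqxx kr.
      by have ek := hk0 k ks hk; rewrite ek eqxx in nk.
    by rewrite asboolF // abs0 mulr0 mul0r.
  have := absD (d k0 + rest) (- rest); rewrite addrK absNN => h.
  have := ler_wpM2r (nrm_ge0 (x k0)) h; rewrite max_mulr // -/(dv k0) dvk0.
  rewrite le_max => /orP [//|h2].
  by have := le_lt_trans h2 hrest; rewrite ltxx.
exists M; split => //; last by exists k0.
rewrite hlin xorth //; apply: (sup_attained _ _ _ M k0) => //.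
by apply/eqP; rewrite eq_le heup hlow.
Qed.

Lemma nrm_y k : nrm (yv k) = nrm (x k).
Proof.
have dk : delta K I k k != 0 by rewrite /delta eqxx oner_eq0.
have [M [hn hle [k0 hk0]]] := core (delta K I k) k (finite_delta K I k) dk.
rewrite -(lincomb_delta K Y I yv k) hn.
have := hle k; rewrite /delta eqxx absone mul1r => h1.
move: hk0; rewrite /delta; case: eqVneq => [->|_]; first by rewrite absone mul1r.
rewrite abs0 mul0r => M0; rewrite -M0 in h1.
by have := lt_le_trans (xk_pos k) h1; rewrite ltxx.
Qed.

Lemma ortho_y d : finite_set (fsupp d) ->
  nrm (lincomb yv d) = sup (range (fun l => abs (d l) * nrm (yv l))).
Proof.
move=> fd.
have -> : (fun l => abs (d l) * nrm (yv l)) = (fun l => abs (d l) * nrm (x l)).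
  by apply: funext => l; rewrite nrm_y.
case: (pselect (exists k, d k != 0)) => [[k1 dk1]|nd].
  have [M [hn hle [k0 hk0]]] := core d k1 fd dk1.
  by rewrite hn (sup_attained _ _ _ M k0).
have -> : d = (fun _ => 0).
  apply: funext => k; apply: contrapT => h; apply: nd; exists k; exact/eqP.
have := xorth _ fsupp0; rewrite lincomb0 => <-.
by rewrite lincomb0.
Qed.

Definition Sp (v : Y) := exists d, finite_set (fsupp d) /\ v = lincomb yv d.

Lemma Sp0 : Sp 0.
Proof. by exists (fun _ => 0); split; [exact: fsupp0 | rewrite lincomb0]. Qed.

Lemma SpD u w : Sp u -> Sp w -> Sp (u + w).
Proof.
move=> [d1 [f1 ->]] [d2 [f2 ->]]; exists (fun i => d1 i + d2 i); split.
  exact: fsuppD.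
by rewrite lincombD.
Qed.

Lemma SpZ b u : Sp u -> Sp (b *: u).
Proof.
move=> [d [f ->]]; exists (fun i => b * d i); split; first exact: fsuppZ.
by rewrite lincombZ.
Qed.

Lemma Sp_sum (s : seq I) (F : I -> Y) : (forall i, i \in s -> Sp (F i)) ->
  Sp (\sum_(i <- s) F i).
Proof.
elim: s => [|b s IH] H; first by rewrite big_nil; exact: Sp0.
rewrite big_cons; apply: SpD; first by apply: H; rewrite mem_head.
by apply: IH => i hi; apply: H; rewrite in_cons hi orbT.
Qed.

Lemma Sp_y k : Sp (yv k).
Proof.
exists (delta K I k); split; first exact: finite_delta.
by rewrite lincomb_delta.
Qed.

Lemma Sp_x l : Sp (x l).
Proof.
elim/wf_ind: l => l IH.
have fP : finite_set [set m | le m l /\ m <> l].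
  by apply: sub_finite_set (le_fin l) => m hm; exact: hm.1.
have -> : x l = yv l + (-1) *: \sum_(m \in [set m | le m l /\ m <> l]) c m l *: x m.
  by rewrite /yv scaleN1r addrK.
apply: SpD; first exact: Sp_y.
apply: SpZ; rewrite fsbig_finite //; apply: Sp_sum => m.
rewrite in_fset_set // inE => -[hm hne].
by apply: SpZ; apply: IH.
Qed.

Lemma Sp_all v : Sp v.
Proof.
have [cc [[fc ->] _]] := xbasis v.
rewrite (lincomb_seq _ _ _ x cc (fset_set (fsupp cc))); last 2 first.
- exact: fset_uniq.
- by move=> i hi /=; rewrite in_fset_set // inE.
by apply: Sp_sum => i _; apply: SpZ; apply: Sp_x.
Qed.

Lemma basis_y : is_basis yv.
Proof.
move=> v; have [d [fd ->]] := Sp_all v.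
exists d; split => // d' [fd' e].
apply: contrapT => ne.
have [k hk] : exists k, d k - d' k != 0.
  apply: contrapT => nk; apply: ne; apply: funext => k.
  apply/eqP; rewrite -subr_eq0; apply/eqP; apply: contrapT => h.
  by apply: nk; exists k; exact/eqP.
have [M [hn hle _]] := core (fun i => d i - d' i) k (fsuppB _ _ _ _ fd fd') hk.
rewrite lincombB // e subrr in hn.
have nrm0 : nrm 0 = 0 by apply/nrm_eq0.
rewrite nrm0 in hn; have := hle k; rewrite -hn.
have : 0 < abs (d k - d' k) * nrm (x k).
  rewrite mulr_gt0 ?xk_pos // lt_def abs_ge0 andbT.
  by apply/eqP => /abs_eq0 h; rewrite h eqxx in hk.
by move=> h1 h2; have := lt_le_trans h1 h2; rewrite ltxx.
Qed.

End Main.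

Theorem lemma2p5 (R : realType) (p : nat) (K : fieldType) (abs : K -> R)
  (HK : padic_complete_field p abs)
  (Y : lmodType K) (nrm : Y -> R) (HY : normed_space abs nrm)
  (I : choiceType) (x : I -> Y) (Hx : orthogonal_basis abs nrm x)
  (le : I -> I -> Prop)
  (le_refl : forall k, le k k)
  (le_anti : forall k l, le k l -> le l k -> k = l)
  (le_trans : forall k l m, le k l -> le l m -> le k m)
  (le_min : forall S : set I, S !=set0 ->
      exists m, S m /\ forall l, S l -> le l m -> l = m)
  (le_fin : forall k, finite_set [set l | le l k])
  (Hmono : forall l k, le l k -> nrm (x l) <= nrm (x k))
  (c : I -> I -> K) (Hc : forall l k, le l k -> abs (c l k) <= 1) :
  let y := fun k => x k + \sum_(l \in [set l | le l k /\ l <> k]) c l k *: x l in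
  orthogonal_basis abs nrm y /\ forall k, nrm (y k) = nrm (x k).
Proof.
move=> y.
case: HK => _ [a0 [a1 [a2 a3]]] _ _.
case: HY => n0 n1 _ n3.
case: Hx => xb xo.
split; first split.
- exact: (@basis_y _ _ abs a0 a1 a2 a3 _ nrm n0 n1 _ x xb xo le le_refl le_anti le_trans le_min le_fin Hmono c Hc).
- move=> d fd.
  exact: (@ortho_y _ _ abs a0 a1 a2 a3 _ nrm n0 n1 _ x xb xo le le_refl le_anti le_trans le_fin Hmono c Hc d fd).
- move=> k.
  exact: (@nrm_y _ _ abs a0 a1 a2 a3 _ nrm n0 n1 _ x xb xo le le_refl le_anti le_trans le_fin Hmono c Hc k).
Qed.
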